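(* Suppose $s \geq 2$, $a \geq 1$ with $at' \leq k_I-\delta$ and $t'(sk_I+a)+\delta-1 \leq q$. Then the linear code $\mathcal{C}^F$ over $\mathbb{F}_q$ with parity-check matrix $H^F$ (described in the context) is an optimal $\big(n_F=t'(sk_{I}+a+\delta-1),~k_F=st'k_I,~d_F=at'+\delta;~(r=sk_{I}+a,\delta)\big)$-LRC.
   Context: Let $q$ be a prime power and let $\delta\geq 2$, $t'\geq 1$, $s$, $a$, $k_I$ be positive integers; set $t=st'$, $r=sk_I+a$, $n_F=t'(r+\delta-1)$ and $k_F=tk_I$. Let $\alpha_{i,j}$ ($i\in[t]$, $j\in[k_I]$), $\beta_{i',j'}$ ($i'\in[t']$, $j'\in[a]$) and $\gamma_\ell$ ($\ell\in[\delta-1]$) be $tk_I+at'+\delta-1$ pairwise distinct elements of $\mathbb{F}_q$. For elements $x_1,\dots,x_n\in\mathbb{F}_q$, $V_k(x_1,\dots,x_n)$ denotes the $k\times n$ Vandermonde matrix whose $(u,v)$ entry is $x_v^{u-1}$. For $i\in[t']$ let $L_i$ be the ordered list of $r+\delta-1$ elements $\alpha_{s(i-1)+1,1},\dots,\alpha_{s(i-1)+1,k_I},\dots,\alpha_{si,1},\dots,\alpha_{si,k_I},\beta_{i,1},\dots,\beta_{i,a},\gamma_1,\dots,\gamma_{\delta-1}$. Let $A_i=V_{\delta-1}(L_i)\in\mathbb{F}_q^{(\delta-1)\times(r+\delta-1)}$, and let $B_i\in\mathbb{F}_q^{at'\times(r+\delta-1)}$ be the matrix whose rows are the entrywise powers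 of the list $L_i$ with exponents $\delta-1,\delta,\dots,at'+\delta-2$ (i.e., the row with exponent $e$ is $(y^{e})_{y\in L_i}$). Define $H^F$ as the block matrix with $A_1,\dots,A_{t'}$ placed block-diagonally in the top $t'(\delta-1)$ rows (zeros elsewhere) and the bottom block row $(B_1\;B_2\;\cdots\;B_{t'})$. An $(n,k,d;(r,\delta))$-LRC is a code of length $n$, dimension $k$, minimum distance $d$ in which each coordinate lies in a set $J$ of at most $r+\delta-1$ coordinates such that the restriction of the code to $J$ has minimum distance at least $\delta$; it is optimal if $d=n-k+1-(\lceil k/r\rceil-1)(\delta-1)$ (the Singleton-type bound). *)

(* Defs.v *)
From HB Require Import structures.
From mathcomp Require Import all_boot all_order all_algebra.
Set Implicit Arguments. Unset Strict Implicit. Unset Printing Implicit Defensive.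
Import GRing.Theory.
Local Open Scope ring_scope.

Section Defs.
Variable F : fieldType.

(* A linear code of length n is represented by a square matrix C whose row
   space is the code; codewords are the row vectors c with (c <= C)%MS. *)

Definition wt n (c : 'rV[F]_n) : nat := #|[set j : 'I_n | c ord0 j != 0]|.

Definition code_dim n (C : 'M[F]_n) : nat := \rank C.

Definition is_min_dist n (C : 'M[F]_n) (d : nat) : Prop :=
  (exists c : 'rV[F]_n, (c <= C)%MS /\ c != 0 /\ wt c = d) /\
  (forall c : 'rV[F]_n, (c <= C)%MS -> c != 0 -> (d <= wt c)%N).

(* (r,delta)-locality: every coordinate lies in a set J of at most r+delta-1
   coordinates such that the restriction C|_J has minimum distance >= delta,
   i.e. every codeword whose restriction to J is nonzero has at least delta
   nonzero coordinates in J. *)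
Definition has_locality n (C : 'M[F]_n) (r delta : nat) : Prop :=
  forall j : 'I_n, exists J : {set 'I_n},
    [/\ j \in J, (#|J| <= r + delta.-1)%N &
        forall c : 'rV[F]_n, (c <= C)%MS -> [exists i in J, c ord0 i != 0%R] ->
          (delta <= #|[set i in J | c ord0 i != 0%R]|)%N].

Definition is_LRC n (C : 'M[F]_n) (k d r delta : nat) : Prop :=
  [/\ code_dim C = k, is_min_dist C d & has_locality C r delta].

(* Singleton-type bound value n - k + 1 - (ceil(k/r) - 1)(delta - 1), in int. *)
Definition singleton_LRC (n k r delta : nat) : int :=
  (n%:Z - k%:Z + 1 - (((k + r).-1 %/ r)%N%:Z - 1) * (delta%:Z - 1))%R.

Definition is_optimal_LRC n (C : 'M[F]_n) (k d r delta : nat) : Prop :=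
  is_LRC C k d r delta /\ d%:Z = singleton_LRC n k r delta.

(* extension of an ordinal-indexed family to nat indices (0 out of range;
   only used in range). *)
Definition ext1 m (f : 'I_m -> F) (x : nat) : F :=
  match (insub x : option 'I_m) with Some i => f i | None => 0 end.
Definition ext2 m n (f : 'I_m -> 'I_n -> F) (x y : nat) : F :=
  match (insub x : option 'I_m), (insub y : option 'I_n) with
  | Some i, Some j => f i j | _, _ => 0 end.

Variables (s t' a kI delta : nat).
Variables (alpha : 'I_(s * t') -> 'I_kI -> F) (beta : 'I_t' -> 'I_a -> F)
          (gamma : 'I_delta.-1 -> F).

Definition rloc : nat := (s * kI + a)%N.
Definition blen : nat := (rloc + delta.-1)%N.

(* All the evaluation points, as one family (for pairwise distinctness). *)
Definition all_points
  (x : ('I_(s * t') * 'I_kI + 'I_t' * 'I_a) + 'I_delta.-1) : F :=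
  match x with
  | inl (inl (i, j)) => alpha i j
  | inl (inr (i, j)) => beta i j
  | inr l => gamma l
  end.

(* L i p = the p-th entry (0-based) of the list L_{i+1} (0-based block i):
   alpha_{s i + 1, 1..kI}, ..., alpha_{s(i+1), 1..kI}, beta_{i+1,1..a},
   gamma_{1..delta-1}. *)
Definition Lpt (i p : nat) : F :=
  if (p < s * kI)%N then ext2 alpha (s * i + p %/ kI) (p %% kI)
  else if (p < rloc)%N then ext2 beta i (p - s * kI)
  else ext1 gamma (p - rloc).

(* Column g (0-based) of H^F belongs to block g %/ blen at position g %% blen. *)
(* Top block rows: block-diagonal A_i = V_{delta-1}(L_i). *)
Definition HF_top : 'M[F]_(t' * delta.-1, t' * blen) :=
  \matrix_(u < t' * delta.-1, g < t' * blen)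
    if (u %/ delta.-1 == g %/ blen)%N
    then Lpt (g %/ blen) (g %% blen) ^+ (u %% delta.-1) else 0.

(* Bottom block row (B_1 ... B_t'): exponents delta-1, ..., a t' + delta - 2. *)
Definition HF_bot : 'M[F]_(a * t', t' * blen) :=
  \matrix_(w < a * t', g < t' * blen)
    Lpt (g %/ blen) (g %% blen) ^+ (delta.-1 + w).

Definition HF : 'M[F]_(t' * delta.-1 + a * t', t' * blen) := col_mx HF_top HF_bot.

Definition CF : 'M[F]_(t' * blen) := kermx HF^T.

End Defs.

(* Main.v *)
Require Import Defs.
From HB Require Import structures.
From mathcomp Require Import all_boot all_order all_algebra.
From mathcomp Require Import zify.
Set Implicit Arguments. Unset Strict Implicit. Unset Printing Implicit Defensive.
Import GRing.Theory.
Local Open Scope ring_scope.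

Lemma keyL (F : fieldType) (n m : nat) (c pt : 'I_n -> F) (B : pred 'I_n) :
 (forall k, (k < m)%N -> \sum_(g | B g) c g * pt g ^+ k = 0) ->
 (#|[set g | B g && (c g != 0%R)]| <= m)%N ->
 forall g0, B g0 -> c g0 != 0 ->
   (forall g, B g -> c g != 0 -> g != g0 -> pt g != pt g0) -> False.
Proof.
move=> hsum hcard g0 Bg0 cg0 hdist.
set T := [set g | B g && (c g != 0%R)].
have poly0 : forall f : {poly F}, (size f <= m)%N ->
    \sum_(g | B g) c g * f.[pt g] = 0.
  move=> f hf.
  under eq_bigr do rewrite horner_coef big_distrr /=.
  rewrite exchange_big /= big1 // => k _.
  under eq_bigr do rewrite mulrCA.
  by rewrite -big_distrr /= hsum ?mulr0 // (leq_trans (ltn_ord k) hf).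
have g0T : g0 \in T by rewrite inE Bg0.
set f := \prod_(x <- map pt (enum (T :\ g0))) ('X - x%:P).
have szf : size f = #|T|.
  by rewrite /f size_prod_XsubC size_map -cardE (cardsD1 g0 T) g0T.
have := poly0 f; rewrite szf => /(_ hcard).
rewrite (bigD1 g0) //= big1 ?addr0; last first.
  move=> g /andP[Bg ng].
  have [->|cg] := eqVneq (c g) 0; first by rewrite mul0r.
  have : root f (pt g).
    rewrite root_prod_XsubC; apply: map_f.
    by rewrite mem_enum !inE ng Bg cg.
  by move/rootP->; rewrite mulr0.
move/eqP; rewrite mulf_eq0 (negbTE cg0) /= => /eqP/rootP. idtac.
rewrite /f root_prod_XsubC => /mapP[g]; rewrite mem_enum !inE => /andP[ng /andP[Bg cg]] /eqP.
by rewrite eq_sym (negbTE (hdist g Bg cg ng)).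
Qed.

Lemma ext2E (F : fieldType) m n (f : 'I_m -> 'I_n -> F) x y (hx : (x < m)%N) (hy : (y < n)%N) :
  ext2 f x y = f (Ordinal hx) (Ordinal hy).
Proof. by rewrite /ext2 (insubT (fun x => x < m)%N hx) (insubT (fun y => y < n)%N hy). Qed.

Lemma ext1E (F : fieldType) m (f : 'I_m -> F) x (hx : (x < m)%N) :
  ext1 f x = f (Ordinal hx).
Proof. by rewrite /ext1 (insubT (fun x => x < m)%N hx). Qed.

Section S.
Variable F : fieldType.
Variables (s t' a kI delta : nat).
Variables (alpha : 'I_(s * t') -> 'I_kI -> F) (beta : 'I_t' -> 'I_a -> F)
  (gamma : 'I_delta.-1 -> F).
Hypothesis hd : (2 <= delta)%N.
Hypothesis ht : (1 <= t')%N.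
Hypothesis hk : (1 <= kI)%N.
Hypothesis hs : (2 <= s)%N.
Hypothesis ha : (1 <= a)%N.
Hypothesis hat : (a * t' <= kI - delta)%N.
Hypothesis hinj : injective (all_points alpha beta gamma).

Local Notation bl := (blen s a kI delta).
Local Notation L := (Lpt alpha beta gamma).

Lemma blE : bl = (s * kI + a + delta.-1)%N.
Proof. by []. Qed.

Lemma arith_alpha kI0 i i' p p' : (0 < kI0)%N -> (p < s * kI0)%N -> (p' < s*kI0)%N -> (s * i + p %/ kI0 = s * i' + p' %/ kI0)%N -> (p %% kI0 = p' %% kI0)%N -> i = i' /\ p = p'.
Proof.
move=> k0 hp hp' e1 e2.
have hq : (p %/ kI0 < s)%N by rewrite ltn_divLR // mulnC.
have hq' : (p' %/ kI0 < s)%N by rewrite ltn_divLR // mulnC.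
move: (divn_eq p kI0) (divn_eq p' kI0). 
set q := (p %/ kI0)%N in e1 hq *. set q' := (p' %/ kI0)%N in e1 hq' *.
move: e2. set u := (p %% kI0)%N. set u' := (p' %% kI0)%N.
move=> e2 E E'.
have ii : i = i' by nia.
split => //. rewrite E E' e2. subst i'. nia.
Qed.

Lemma LA i p : (i < t')%N -> (p < s * kI)%N -> exists (X : 'I_(s * t')) (Y : 'I_kI),
  [/\ val X = (s * i + p %/ kI)%N, val Y = (p %% kI)%N &
      L i p = all_points alpha beta gamma (inl (inl (X, Y)))].
Proof.
move=> hi hp.
have hq : (p %/ kI < s)%N by rewrite ltn_divLR // mulnC.
have h1 : (s * i + p %/ kI < s * t')%N by nia.
have h2 : (p %% kI < kI)%N by rewrite ltn_pmod.
exists (Ordinal h1), (Ordinal h2); split => //.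
by rewrite /Lpt hp (ext2E _ h1 h2).
Qed.

Lemma LB i p : (i < t')%N -> (s * kI <= p)%N -> (p < s * kI + a)%N ->
  exists (X : 'I_t') (Y : 'I_a),
  [/\ val X = i, val Y = (p - s * kI)%N &
      L i p = all_points alpha beta gamma (inl (inr (X, Y)))].
Proof.
move=> hi hp hp2.
have h2 : (p - s * kI < a)%N by lia.
exists (Ordinal hi), (Ordinal h2); split => //.
by rewrite /Lpt ltnNge hp /= /rloc hp2 (ext2E _ hi h2).
Qed.

Lemma LG i p : (s * kI + a <= p)%N -> (p < bl)%N ->
  exists (Y : 'I_delta.-1),
  val Y = (p - (s * kI + a))%N /\ L i p = all_points alpha beta gamma (inr Y).
Proof.
move=> hp hp2.
have h2 : (p - (s * kI + a) < delta.-1)%N by rewrite blE in hp2; lia.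
exists (Ordinal h2); split => //.
have E : (p < s * kI)%N = false by lia.
by rewrite /Lpt E /rloc ltnNge hp /= (ext1E _ h2).
Qed.

Lemma Lcase i p : (i < t')%N -> (p < bl)%N ->
  [\/ (p < s * kI)%N /\ exists (X : 'I_(s * t')) (Y : 'I_kI),
  [/\ val X = (s * i + p %/ kI)%N, val Y = (p %% kI)%N &
      L i p = all_points alpha beta gamma (inl (inl (X, Y)))],
   (s * kI <= p < s * kI + a)%N /\ exists (X : 'I_t') (Y : 'I_a),
  [/\ val X = i, val Y = (p - s * kI)%N &
      L i p = all_points alpha beta gamma (inl (inr (X, Y)))] |
   (s * kI + a <= p)%N /\ exists (Y : 'I_delta.-1),
  val Y = (p - (s * kI + a))%N /\ L i p = all_points alpha beta gamma (inr Y)].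
Proof.
move=> hi hp.
case: (ltnP p (s * kI)) => h1; first by constructor 1; split => //; apply: LA.
case: (ltnP p (s * kI + a)) => h2; first by constructor 2; split; [apply/andP; split | apply: LB].
by constructor 3; split => //; apply: LG.
Qed.

Lemma Lpt_inj i i' p p' : (i < t')%N -> (i' < t')%N -> (p < bl)%N -> (p' < bl)%N ->
  L i p = L i' p' -> p = p' /\ ((p < s * kI + a)%N -> i = i').
Proof.
move=> hi hi' hp hp'.
case: (Lcase hi hp) => [[h1 [X [Y [eX eY ->]]]]|[h1 [X [Y [eX eY ->]]]]|[h1 [Y [eY ->]]]];
case: (Lcase hi' hp') => [[h1' [X' [Y' [eX' eY' ->]]]]|[h1' [X' [Y' [eX' eY' ->]]]]|[h1' [Y' [eY' ->]]]];
move/hinj => // [].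
- move=> /(congr1 val) e1 /(congr1 val) e2.
  rewrite eX eX' in e1; rewrite eY eY' in e2.
  have [-> ->] := arith_alpha hk h1 h1' e1 e2; by [].
- move=> /(congr1 val) e1 /(congr1 val) e2.
  rewrite eX eX' in e1; rewrite eY eY' in e2.
  split; [lia | by []].
- move=> /(congr1 val) e2. rewrite eY eY' in e2. split; lia.
Qed.

Local Notation N := (t' * bl)%N.
Definition P (g : 'I_N) : F := L ((g %/ bl)%N) ((g %% bl)%N).

Lemma bl_gt0 : (0 < bl)%N.
Proof. rewrite blE; lia. Qed.

Lemma blk_lt (g : 'I_N) : ((g %/ bl)%N < t')%N.
Proof. by rewrite ltn_divLR ?bl_gt0 // mulnC. Qed.

Lemma pos_lt (g : 'I_N) : ((g %% bl)%N < bl)%N.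
Proof. by rewrite ltn_pmod ?bl_gt0. Qed.

Lemma col_eq (g g' : 'I_N) : (g %/ bl)%N = (g' %/ bl)%N -> (g %% bl)%N = (g' %% bl)%N -> g = g'.
Proof. by move=> e1 e2; apply: val_inj; rewrite /= (divn_eq g bl) (divn_eq g' bl) e1 e2. Qed.

Lemma P_inj (g g' : 'I_N) : P g = P g' ->
  (g %% bl)%N = (g' %% bl)%N /\ (((g %% bl)%N < s * kI + a)%N -> g = g').
Proof.
move=> e; have [e1 e2] := Lpt_inj (blk_lt g) (blk_lt g') (pos_lt g) (pos_lt g') e.
by split => // /e2 e3; apply: col_eq.
Qed.

Lemma P_inj_blk (g g' : 'I_N) : (g %/ bl)%N = (g' %/ bl)%N -> P g = P g' -> g = g'.
Proof. by move=> e1 /P_inj [e2 _]; apply: col_eq. Qed.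

Local Notation CF := (CF alpha beta gamma).
Local Notation Top := (HF_top alpha beta gamma).
Local Notation Bot := (HF_bot alpha beta gamma).

Lemma cwE (c : 'rV[F]_N) : (c <= CF)%MS <-> (c *m Top^T = 0 /\ c *m Bot^T = 0).
Proof.
rewrite /Defs.CF /HF tr_col_mx; split.
  by move/sub_kermxP; rewrite mul_mx_row -row_mx0 => /eq_row_mx.
by move=> [e1 e2]; apply/sub_kermxP; rewrite mul_mx_row e1 e2 row_mx0.
Qed.

Lemma cw_block (c : 'rV[F]_N) : (c <= CF)%MS -> forall i e, (i < t')%N -> (e < delta.-1)%N ->
  \sum_(g : 'I_N | (g %/ bl)%N == i) c 0 g * P g ^+ e = 0.
Proof.
move=> /cwE [cT _] i e hi he.
have hu : (i * delta.-1 + e < t' * delta.-1)%N by nia.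
move/matrixP: cT => /(_ 0 (Ordinal hu)); rewrite !mxE /= => E; rewrite -[X in _ = X]E.
rewrite big_mkcond /=; apply: eq_bigr => g _; rewrite !mxE /=.
have -> : ((i * delta.-1 + e) %/ delta.-1 = i)%N.
  by rewrite divnMDl ?divn_small ?addn0 //; lia.
have -> : ((i * delta.-1 + e) %% delta.-1 = e)%N.
  by rewrite modnMDl modn_small.
by rewrite eq_sym; case: eqP => _; rewrite ?mulr0.
Qed.

Lemma cw_glob (c : 'rV[F]_N) : (c <= CF)%MS -> forall e, (e < a * t' + delta.-1)%N ->
  \sum_g c 0 g * P g ^+ e = 0.
Proof.
move=> hc e he; case: (ltnP e delta.-1) => hed.
  rewrite (partition_big (fun g : 'I_N => Ordinal (blk_lt g)) xpredT) //=.
  apply: big1 => i _.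
  rewrite -[RHS](cw_block hc (ltn_ord i) hed); apply: eq_bigl => g; by [].
move: hc => /cwE [_ cB].
have hw : (e - delta.-1 < a * t')%N by lia.
move/matrixP: cB => /(_ 0 (Ordinal hw)); rewrite !mxE /= => E; rewrite -[X in _ = X]E.
apply: eq_bigr => g _; rewrite !mxE /=.
by rewrite subnKC.
Qed.

Lemma cw_intro (c : 'rV[F]_N) : (forall g : 'I_N, (bl <= g)%N -> c 0 g = 0) ->
  (forall e, (e < a * t' + delta.-1)%N -> \sum_g c 0 g * P g ^+ e = 0) -> (c <= CF)%MS.
Proof.
move=> hz hs0; apply/cwE; split; apply/rowP => u; rewrite !mxE.
- have he : (u %% delta.-1 < delta.-1)%N by rewrite ltn_pmod //; lia.
  case: (eqVneq (u %/ delta.-1)%N 0%N) => hu.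
  + rewrite -[RHS](hs0 (u %% delta.-1)%N); last by lia.
    apply: eq_bigr => g _; rewrite !mxE hu.
    case: (ltnP g bl) => hg.
      by rewrite /P (divn_small hg) eqxx.
    by rewrite hz ?mul0r.
  + apply: big1 => g _; rewrite !mxE; case: eqP => h; last by rewrite mulr0.
    case: (ltnP g bl) => hg; last by rewrite hz ?mul0r.
    by move: hu; rewrite h (divn_small hg) eqxx.
- under eq_bigr do rewrite !mxE.
  apply: hs0; have := ltn_ord u; lia.
Qed.

Local Notation HF := (HF alpha beta gamma).
Local Notation d1 := (delta.-1).
Local Notation m2 := (a * t')%N.

Lemma HF_free : row_free HF.
Proof.
have hmod : forall u : nat, (u %% d1 < d1)%N by move=> u; rewrite ltn_pmod //; lia.
rewrite -kermx_eq0; apply/eqP/row_matrixP => j; rewrite row0.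
set v := row j (kermx HF).
have hv : v *m HF = 0 by apply/sub_kermxP; exact: row_sub.
clearbody v.
pose z (u : 'I_(t' * d1)) := v 0 (lshift m2 u).
pose w (k : 'I_m2) := v 0 (rshift (t' * d1) k).
have claim : forall g : 'I_N,
  \sum_(u : 'I_(t' * d1) | (u %/ d1 == g %/ bl)%N) z u * P g ^+ (u %% d1)%N
  + \sum_k w k * P g ^+ (d1 + k)%N = 0.
  move=> g; move/matrixP: hv => /(_ 0 g); rewrite !mxE big_split_ord /= => E.
  rewrite -[RHS]E; congr (_ + _).
    rewrite big_mkcond /=; apply: eq_bigr => u _.
    by rewrite /HF col_mxEu !mxE; case: eqP => _; rewrite ?mulr0.
  by apply: eq_bigr => k _; rewrite /HF col_mxEd !mxE.
pose Q (i : nat) : {poly F} := \sum_(u : 'I_(t' * d1) | (u %/ d1 == i)%N) z u *: 'X^(u %% d1)%N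
  + \sum_k w k *: 'X^(d1 + k)%N.
have QE : forall i x, (Q i).[x] = \sum_(u : 'I_(t' * d1) | (u %/ d1 == i)%N) z u * x ^+ (u %% d1)%N
  + \sum_k w k * x ^+ (d1 + k)%N.
  move=> i x; rewrite /Q hornerD !horner_sum.
  by congr (_ + _); apply: eq_bigr => u _; rewrite hornerZ hornerXn.
have Qc : forall i n, (Q i)`_n = \sum_(u : 'I_(t' * d1) | (u %/ d1 == i)%N) z u * (n == (u %% d1)%N)%:R
  + \sum_k w k * (n == (d1 + k)%N)%:R.
  move=> i n; rewrite /Q coefD !coef_sum.
  by congr (_ + _); apply: eq_bigr => u _; rewrite coefZ coefXn.
have Qsz : forall i, (size (Q i) <= m2 + d1)%N.
  move=> i; apply/leq_sizeP => n hn; rewrite Qc big1 ?add0r.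
    apply: big1 => k _; have -> : (n == (d1 + k)%N) = false by apply/negbTE; have := ltn_ord k; lia.
    by rewrite mulr0.
  move=> u _; have -> : (n == (u %% d1)%N) = false.
    by apply/negbTE; have := hmod u; lia.
  by rewrite mulr0.
have Q0 : forall i, (i < t')%N -> Q i = 0.
  move=> i hi; apply/eqP; apply/negPn/negP => hQ.
  have := max_poly_roots hQ (rs := map (L i) (iota 0 bl)).
  rewrite size_map size_iota => H.
  have : (bl < size (Q i))%N.
    apply: H.
      apply/allP => x /mapP [p]; rewrite mem_iota add0n => hp ->.
      have hg : (i * bl + p < N)%N by nia.
      have e1 : ((i * bl + p) %/ bl = i)%N by rewrite divnMDl ?bl_gt0 // divn_small // addn0.
      have e2 : ((i * bl + p) %% bl = p)%N by rewrite modnMDl modn_small.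
      have := claim (Ordinal hg); rewrite /P /= e1 e2 => E.
      by apply/rootP; rewrite QE.
    rewrite map_inj_in_uniq ?iota_uniq // => p p'; rewrite !mem_iota !add0n => hp hp' e.
    by case: (Lpt_inj hi hi hp hp' e).
  have := Qsz i; rewrite blE; nia.
apply/rowP => x; rewrite mxE.
case: (splitP x) => [u ex|k ex].
- rewrite (_ : x = lshift m2 u); last by apply: val_inj.
  change (z u = 0).
  have hi : (u %/ d1 < t')%N by rewrite ltn_divLR; [have := ltn_ord u; lia |lia].
  have := congr1 (fun p : {poly F} => p`_(u %% d1)%N) (Q0 _ hi).
  rewrite /= coef0 Qc (bigD1 u) //= eqxx mulr1.
  rewrite [X in _ + X + _ = _]big1 ?addr0; last first.
    move=> u' /andP [hu' nu']; case: eqP => e; last by rewrite mulr0.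
    case/eqP: nu'; apply: val_inj => /=.
    by rewrite (divn_eq u' d1) (divn_eq u d1) (eqP hu') -e.
  rewrite big1 ?addr0 //.
  move=> k _; have -> : ((u %% d1)%N == (d1 + k)%N) = false.
    by apply/negbTE; have := hmod u; lia.
  by rewrite mulr0.
- rewrite (_ : x = rshift (t' * d1) k); last by apply: val_inj.
  change (w k = 0).
  have := congr1 (fun p : {poly F} => p`_(d1 + k)%N) (Q0 _ ht).
  rewrite /= coef0 Qc [X in X + _]big1 ?add0r; last first.
    move=> u _; have -> : ((d1 + k)%N == (u %% d1)%N) = false.
      by apply/negbTE; have := hmod u; lia.
    by rewrite mulr0.
  rewrite (bigD1 k) //= eqxx mulr1 big1 ?addr0 //.
  move=> k' nk; case: eqP => e; last by rewrite mulr0.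
  by case/eqP: nk; apply: val_inj; rewrite /=; lia.
Qed.

Lemma dimCF : \rank CF = (s * t' * kI)%N.
Proof.
rewrite /Defs.CF mxrank_ker mxrank_tr (eqP HF_free) blE /rloc.
have hd1 : (delta.-1 + 1 = delta)%N by lia.
nia.
Qed.

Lemma card_blk (S : {set 'I_N}) i (rng : seq nat) :
  {in S, forall g : 'I_N, (g %/ bl)%N = i /\ (g %% bl)%N \in rng} -> (#|S| <= size rng)%N.
Proof.
move=> H; rewrite cardE -(size_map (fun g : 'I_N => (g %% bl)%N)).
apply: uniq_leq_size.
  rewrite map_inj_in_uniq ?enum_uniq // => g g'; rewrite !mem_enum => hg hg' e.
  by apply: col_eq e; rewrite (proj1 (H g hg)) (proj1 (H g' hg')).
by move=> x /mapP [g]; rewrite mem_enum => hg ->; exact: (proj2 (H g hg)).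
Qed.

Lemma locCF : has_locality CF (s * kI + a) delta.
Proof.
move=> j; exists [set g : 'I_N | (g %/ bl)%N == (j %/ bl)%N]; split.
- by rewrite inE.
- have := @card_blk [set g : 'I_N | (g %/ bl)%N == (j %/ bl)%N] (j %/ bl)%N (iota 0 bl).
  rewrite size_iota; apply => g; rewrite inE => /eqP ->; split => //.
  by rewrite mem_iota add0n pos_lt.
- move=> c hc /existsP [g0 /andP [g0J cg0]]; rewrite leqNgt; apply/negP => hlt.
  rewrite inE in g0J.
  apply: (@keyL F N d1 (c 0) P (fun g : 'I_N => (g %/ bl)%N == (j %/ bl)%N) _ _ g0 g0J cg0).
  + by move=> k hk0; apply: (cw_block hc (blk_lt j) hk0).
  + have -> : [set g : 'I_N | ((g %/ bl)%N == (j %/ bl)%N) && (c 0 g != 0)] =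
              [set i in [set g : 'I_N | (g %/ bl)%N == (j %/ bl)%N] | c 0 i != 0].
      by apply/setP => g; rewrite !inE.
    rewrite -ltnS; apply: (leq_trans hlt); lia.
  + move=> g Bg _ ng; apply/negP => /eqP e; case/eqP: ng.
    by apply: P_inj_blk e; rewrite (eqP Bg) (eqP g0J).
Qed.

Lemma nz_entry m (c : 'rV[F]_m) : c != 0 -> exists g, c 0 g != 0.
Proof.
move=> cnz; case: (pickP (fun g => c 0 g != 0)) => [g h|h]; first by exists g.
case/negP: cnz; apply/eqP/rowP => g; rewrite mxE; apply/eqP/negbFE; exact: h.
Qed.

Lemma wt_lb (c : 'rV[F]_N) : (c <= CF)%MS -> c != 0 -> (m2 + delta <= wt c)%N.
Proof.
move=> hc cnz; rewrite leqNgt; apply/negP => hlt.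
have hpos : forall g0, c 0 g0 != 0 -> (s * kI + a <= g0 %% bl)%N.
  move=> g0 cg0; rewrite leqNgt; apply/negP => hg0.
  apply: (@keyL F N (m2 + d1) (c 0) P xpredT _ _ g0 isT cg0).
  + by move=> k hk0; apply: (cw_glob hc hk0).
  + move: hlt; rewrite /wt.
    have -> : [set g | xpredT g && (c 0 g != 0)] = [set j | c 0 j != 0] by apply/setP => g; rewrite !inE.
    lia.
  + move=> g _ _ ng; apply/negP => /eqP e; case/eqP: ng.
    by have [_ h] := P_inj (esym e); rewrite (h hg0).
have [g0 cg0] := nz_entry cnz.
apply: (@keyL F N d1 (c 0) P (fun g : 'I_N => (g %/ bl)%N == (g0 %/ bl)%N) _ _ g0 (eqxx _) cg0).
+ by move=> k hk0; apply: (cw_block hc (blk_lt g0) hk0).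
+ have := @card_blk [set g : 'I_N | ((g %/ bl)%N == (g0 %/ bl)%N) && (c 0 g != 0)] (g0 %/ bl)%N (iota (s * kI + a) d1).
  rewrite size_iota; apply => g; rewrite inE => /andP [/eqP -> cg]; split => //.
  rewrite mem_iota hpos //=; have := pos_lt g; have := blE; lia.
+ move=> g Bg _ ng; apply/negP => /eqP e; case/eqP: ng.
  by apply: P_inj_blk e; rewrite (eqP Bg).
Qed.

Lemma wt_exists : exists c : 'rV[F]_N, [/\ (c <= CF)%MS, c != 0 & wt c = (m2 + delta)%N].
Proof.
pose m0 := (m2 + delta)%N.
have hm0 : (m0 <= bl)%N by rewrite /m0 blE; nia.
have hm0N : (m0 <= N)%N by apply: (leq_trans hm0); rewrite leq_pmull.
pose V : 'M[F]_(m0, m2 + d1) := \matrix_(p < m0, e < m2 + d1) L 0 (p : nat) ^+ (e : nat).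
have nf : ~~ row_free V.
  by rewrite -row_leq_rank -ltnNge; apply: (leq_ltn_trans (rank_leq_col V)); rewrite /m0; lia.
have [p0 hp0] : exists p, row p (kermx V) != 0.
  case: (pickP (fun p => row p (kermx V) != 0)) => [p h|h]; first by exists p.
  case/negP: nf; rewrite -kermx_eq0; apply/eqP/row_matrixP => p; rewrite row0.
  by apply/eqP/negbFE; exact: h.
set v := row p0 (kermx V) in hp0.
have hvV : v *m V = 0 by apply/sub_kermxP; exact: row_sub.
clearbody v.
have hsum : forall e, (e < m2 + d1)%N -> \sum_(p < m0) v 0 p * L 0 p ^+ e = 0.
  move=> e he; move/matrixP: hvV => /(_ 0 (Ordinal he)); rewrite !mxE => E.
  rewrite -[RHS]E; apply: eq_bigr => p _; by rewrite mxE.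
have hvall : forall p, v 0 p != 0.
  move=> p1; apply/negP => /eqP h1.
  have [g0 hg0] := nz_entry hp0.
  apply: (@keyL F m0 (m2 + d1) (v 0) (fun p : 'I_m0 => L 0 p) xpredT _ _ g0 isT hg0).
  + by move=> k hk0; apply: hsum.
  + have : [set g | xpredT g && (v 0 g != 0)] \subset [set~ p1].
      by apply/subsetP => g; rewrite !inE; apply: contra => /eqP ->; rewrite h1.
    move/subset_leq_card; rewrite cardsC1 card_ord /m0 => h; apply: (leq_trans h); lia.
  + move=> g _ _ ng; apply/negP => /eqP e; case/eqP: ng; apply: val_inj.
    have hg : (g < bl)%N by apply: (leq_trans (ltn_ord g)).
    have hg0b : (g0 < bl)%N by apply: (leq_trans (ltn_ord g0)).
    by case: (Lpt_inj ht ht hg hg0b e).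
pose f (p : 'I_m0) := v 0 p.
pose c : 'rV[F]_N := \row_(g < N) ext1 f g.
have c_in : forall (g : 'I_N) (hg : (g < m0)%N), c 0 g = v 0 (Ordinal hg).
  by move=> g hg; rewrite mxE (ext1E _ hg).
have c_out : forall g : 'I_N, ~~ (g < m0)%N -> c 0 g = 0.
  by move=> g hg; rewrite mxE /ext1 insubF //; apply/negbTE.
exists c; split.
- apply: cw_intro.
    move=> g hg; apply: c_out; rewrite -leqNgt; exact: leq_trans hm0 hg.
  move=> e he.
  rewrite (bigID (fun g : 'I_N => (g < m0)%N)) /= [X in _ + X]big1 ?addr0; last first.
    by move=> g hg; rewrite c_out ?mul0r.
  under eq_bigr do rewrite mxE /P.
  rewrite -(big_ord_widen _ (fun k => ext1 f k * L (k %/ bl)%N (k %% bl)%N ^+ e) hm0N).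
  rewrite -[RHS](hsum e he); apply: eq_bigr => p _.
  have hp : (p < bl)%N by apply: (leq_trans (ltn_ord p)).
  rewrite (ext1E _ (ltn_ord p)) divn_small // modn_small //.
  by congr (_ * _); congr (v 0 _); apply: val_inj.
- have h0 : (0 < m0)%N by rewrite /m0; lia.
  have h0N : (0 < N)%N by apply: leq_trans hm0N.
  apply/negP => /eqP c0.
  have := c_in (Ordinal h0N) h0; rewrite c0 mxE => /esym/eqP; apply/negP; exact: hvall.
- rewrite /wt.
  have -> : [set j : 'I_N | c 0 j != 0] = [set widen_ord hm0N p | p : 'I_m0].
    apply/setP => j; rewrite inE; apply/idP/imsetP.
      case: (ltnP j m0) => hj; last by rewrite c_out ?eqxx // -leqNgt.
      by move=> _; exists (Ordinal hj) => //; apply: val_inj.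
    move=> [p _ ->]; rewrite (c_in (widen_ord hm0N p) (ltn_ord p)).
    by have := hvall p; congr (_ != _); congr (v 0 _); apply: val_inj.
  by rewrite card_imset ?card_ord //; by move=> x y /(congr1 val) e; apply: val_inj.
Qed.
End S.

Local Close Scope ring_scope.

Theorem mainTheorem11 (F : finFieldType) (s t' a kI delta : nat)
  (alpha : 'I_(s * t') -> 'I_kI -> F) (beta : 'I_t' -> 'I_a -> F)
  (gamma : 'I_delta.-1 -> F) :
  (2 <= delta)%N -> (1 <= t')%N -> (1 <= kI)%N ->
  (2 <= s)%N -> (1 <= a)%N ->
  (a * t' <= kI - delta)%N ->
  (t' * (s * kI + a) + delta - 1 <= #|F|)%N ->
  injective (all_points alpha beta gamma) ->
  is_optimal_LRC (CF alpha beta gamma)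
    (s * t' * kI) (a * t' + delta) (s * kI + a) delta.
Proof.
move=> hd ht hk hs ha hat _ hinj.
split; first split.
- exact: (dimCF hd ht hk hs ha hat hinj).
- split; last by move=> c; apply: (wt_lb hd ht hk hs ha hat hinj).
  have [c [hc cnz hw]] := wt_exists hd ht hk hs ha hat hinj.
  by exists c.
- exact: (locCF hd ht hk hs ha hat hinj).
rewrite /singleton_LRC.
have hdiv : ((s * t' * kI + (s * kI + a)).-1 %/ (s * kI + a))%N = t'.
  have hr : (0 < s * kI + a)%N by lia.
  have -> : ((s * t' * kI + (s * kI + a)).-1 = t' * (s * kI + a) + (s * kI - a * t' + a - 1))%N.
    have : (a * t' < s * kI)%N by nia.
    nia.
  rewrite divnMDl // divn_small ?addn0 //.
  have : (a * t' < s * kI)%N by nia.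
  lia.
rewrite hdiv /blen /rloc.
have hd1 : (delta.-1 + 1 = delta)%N by lia.
lia.
Qed.
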